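(* Let $G$ be a gap-free simple graph and let $u$ be a minimal monomial generator of $I(G)^2$. Let $X_0$ be the set of variables $x_i$ with $x_i\in (I(G)^{(4)}:u)$ (possibly empty). Then $$\big(I(G)^{(4)}:u\big)+\big(I(G)^3:u\big)=\big(I(G)^3:u\big)+(X_0).$$
   Context: $S=\mathbb{K}[x_1,\dots,x_n]$ over a field $\mathbb{K}$; vertices of $G$ are the variables, edges identified with quadratic monomials. $I(G)$ is the edge ideal and $I(G)^{(s)}=\bigcap_{C\in\mathcal{C}(G)}\mathfrak{p}_C^s$, where $\mathcal{C}(G)$ is the set of minimal vertex covers and $\mathfrak{p}_C$ is generated by the variables in $C$. Two disjoint edges form a gap if the induced subgraph on their four endpoints has only these two edges; $G$ is gap-free if it has no gap. $(X_0)$ denotes the ideal generated by $X_0$ (the zero ideal if $X_0=\emptyset$). *)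

(* Defs.v *)
(* Monomial ideals of K[x_1..x_n] are represented by their
   sets of monomials (exponent vectors 'I_n -> nat). *)
From mathcomp Require Import all_boot.
Set Implicit Arguments. Unset Strict Implicit. Unset Printing Implicit Defensive.

Definition monom (n : nat) := 'I_n -> nat.

Definition mdvd n (a b : monom n) : Prop := forall i, a i <= b i.
Definition mmul n (a b : monom n) : monom n := fun i => a i + b i.
Definition var n (i : 'I_n) : monom n := fun j => (j == i) : nat.

Definition simple_graph n (e : rel 'I_n) : Prop :=
  symmetric e /\ irreflexive e.

Definition gap_free n (e : rel 'I_n) : Prop :=
  forall a b c d : 'I_n, e a b -> e c d ->
    a != c -> a != d -> b != c -> b != d ->
    [|| e a c, e a d, e b c | e b d].

Definition edges_prod n (es : seq ('I_n * 'I_n)) : monom n :=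
  fun k => count (fun p => p.1 == k) es + count (fun p => p.2 == k) es.

(* a monomial lies in I(G)^s iff it is divisible by a product of s edges *)
Definition in_edge_pow n (e : rel 'I_n) (s : nat) (m : monom n) : Prop :=
  exists es : seq ('I_n * 'I_n),
    size es = s /\ all (fun p => e p.1 p.2) es /\ mdvd (edges_prod es) m.

Definition vertex_cover n (e : rel 'I_n) (C : {set 'I_n}) : Prop :=
  forall i j, e i j -> (i \in C) || (j \in C).
Definition min_vertex_cover n (e : rel 'I_n) (C : {set 'I_n}) : Prop :=
  vertex_cover e C /\ forall D : {set 'I_n}, D \subset C -> vertex_cover e D -> D = C.

(* x^m in p_C^s iff total degree of m in the variables of C is >= s *)
Definition in_prime_pow n (C : {set 'I_n}) (s : nat) (m : monom n) : Prop :=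
  s <= \sum_(i in C) m i.

(* symbolic power I(G)^(s) = intersection over minimal vertex covers *)
Definition in_edge_sympow n (e : rel 'I_n) (s : nat) (m : monom n) : Prop :=
  forall C, min_vertex_cover e C -> in_prime_pow C s m.

Definition colon n (I : monom n -> Prop) (u : monom n) : monom n -> Prop :=
  fun m => I (mmul m u).

Definition min_mon_gen n (I : monom n -> Prop) (u : monom n) : Prop :=
  I u /\ forall v, mdvd v u -> I v -> v = u.

Definition in_var_ideal n (X : 'I_n -> Prop) (m : monom n) : Prop :=
  exists i, X i /\ 0 < m i.

(* Main.v *)
Require Import Defs.
From mathcomp Require Import all_boot zify.
From Stdlib Require Import Classical.
Set Implicit Arguments. Unset Strict Implicit.

Lemma cover_min n (e : rel 'I_n) (C : {set 'I_n}) :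
  vertex_cover e C -> exists D : {set 'I_n}, D \subset C /\ min_vertex_cover e D.
Proof.
move: {2}#|C| (leqnn #|C|) => k; elim: k C => [|k IH] C HC Hv.
  exists C; split => //; split => // D DC _; apply/eqP; rewrite eqEcard DC /=.
  by move: HC; rewrite leqn0 => /eqP ->.
have [Hm|] := classic (forall D : {set 'I_n}, D \subset C -> vertex_cover e D -> D = C).
  by exists C.
move=> /not_all_ex_not [D HD].
have [DC HD1] := imply_to_and _ _ HD.
have [HvD nDC] := imply_to_and _ _ HD1.
have DpC : D \proper C by rewrite properEneq DC andbT; apply/eqP.
have := proper_card DpC => ltDC.
have HDk : #|D| <= k by lia.
have [D' [D'D HD']] := IH D HDk HvD.
by exists D'; split => //; apply: subset_trans D'D DC.
Qed.

Lemma sum_sub n (D C : {set 'I_n}) (f : 'I_n -> nat) :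
  D \subset C -> \sum_(k in D) f k <= \sum_(k in C) f k.
Proof.
by move=> DC; rewrite [X in _ <= X](big_setID D) /= (setIidPr DC) leq_addr.
Qed.

Lemma sym_cover n (e : rel 'I_n) s w (C : {set 'I_n}) :
  in_edge_sympow e s w -> vertex_cover e C -> s <= \sum_(k in C) w k.
Proof.
move=> Hs Hv; have [D [DC HD]] := cover_min Hv.
exact: leq_trans (Hs D HD) (sum_sub _ DC).
Qed.

Lemma sum_eq1 n (C : {set 'I_n}) (a : 'I_n) :
  \sum_(k in C) ((a == k) : nat) = (a \in C).
Proof.
case: (boolP (a \in C)) => aC.
  rewrite (bigD1 a) //= eqxx big1 // => k /andP[_ /negbTE]; by rewrite eq_sym => ->.
by rewrite big1 // => k kC; case: eqP => // Ha; rewrite Ha kC in aC.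
Qed.

Definition U2 n (a b c d : 'I_n) := edges_prod [:: (a,b); (c,d)].

Lemma u_sum n (C : {set 'I_n}) a b c d :
  \sum_(k in C) U2 a b c d k = (a \in C) + (b \in C) + (c \in C) + (d \in C).
Proof.
rewrite /U2 /edges_prod /=.
under eq_bigr => k _ do rewrite !addn0.
rewrite !big_split /= !sum_eq1 -!addnA. congr (_ + _). exact: addnCA.
Qed.

Lemma mmul_sum n (C : {set 'I_n}) (f g : monom n) :
  \sum_(k in C) mmul f g k = \sum_(k in C) f k + \sum_(k in C) g k.
Proof. by rewrite /mmul big_split. Qed.

Lemma I3 n (e : rel 'I_n) (w : monom n) (p q r : 'I_n * 'I_n) :
  e p.1 p.2 -> e q.1 q.2 -> e r.1 r.2 ->
  (forall k, edges_prod [:: p; q; r] k <= w k) -> in_edge_pow e 3 w.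
Proof. by move=> Hp Hq Hr H; exists [:: p; q; r]; rewrite /= Hp Hq Hr. Qed.

Lemma mm_le n (m : monom n) i j : i != j -> 0 < m i -> 0 < m j ->
  forall k, (i == k) + (j == k) <= m k.
Proof.
move=> ij Hi Hj k; case: (i =P k) => [Hik|_]; case: (j =P k) => [Hjk|_] /=.
- by rewrite Hik Hjk eqxx in ij.
- by rewrite -Hik; lia.
- by rewrite -Hjk; lia.
- by [].
Qed.

Lemma mm_le2 n (m : monom n) i : 1 < m i ->
  forall k, (i == k) + (i == k) <= m k.
Proof. by move=> Hi k; case: (i =P k) => [<-|_] /=; lia. Qed.

Lemma P4 (A B C D : nat) : [/\ C+D+A+B = A+B+C+D, B+D+A+C = A+B+C+D,
  B+C+A+D = A+B+C+D, A+D+B+C = A+B+C+D & A+C+B+D = A+B+C+D].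
Proof. split; lia. Qed.

Lemma key n (e : rel 'I_n) (m : monom n) (a b c d : 'I_n) :
  symmetric e -> irreflexive e -> gap_free e -> e a b -> e c d ->
  in_edge_sympow e 4 (mmul m (U2 a b c d)) -> ~ in_edge_pow e 3 (mmul m (U2 a b c d)) ->
  exists i, 0 < m i /\ in_edge_sympow e 4 (mmul (var i) (U2 a b c d)).
Proof.
move=> esym eirr gf eab ecd H4 N3.
have Hsc := fun C => @sym_cover _ e _ _ C H4.
have Hw : forall C : {set 'I_n}, \sum_(k in C) mmul m (U2 a b c d) k =
   \sum_(k in C) m k + ((a \in C) + (b \in C) + (c \in C) + (d \in C)).
  by move=> C; rewrite mmul_sum u_sum.
have Hu : forall k, U2 a b c d k = (a==k)+(b==k)+(c==k)+(d==k).
  by move=> k; rewrite /U2 /edges_prod /=; lia.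
have T3 : forall i j x y z t, e i x -> e j y -> e z t ->
   (forall k : 'I_n, (i==k)+(j==k) <= m k) ->
   (forall k : 'I_n, (x==k)+(y==k)+(z==k)+(t==k) = U2 a b c d k) -> False.
  move=> i j x y z t eix ejy ezt Hm Hu'; apply: N3.
  apply: (I3 (p:=(i,x)) (q:=(j,y)) (r:=(z,t))) => // k.
  rewrite /mmul -Hu' /edges_prod /=; have := Hm k; move: (i==k) (j==k) (x==k) (y==k) (z==k) (t==k) (m k) => ? ? ? ? ? ? ?; lia.
have Hind : forall k l, e k l -> 0 < m k -> 0 < m l -> False.
  move=> k l ekl mk ml.
  have kl : k != l by apply/eqP => E; rewrite E eirr in ekl.
  apply: N3; apply: (I3 (p:=(k,l)) (q:=(a,b)) (r:=(c,d))) => // x.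
  rewrite /mmul Hu /edges_prod /=; have := mm_le kl mk ml x; move: (k==x) (l==x) (a==x) (b==x) (c==x) (d==x) (m x) => ? ? ? ? ? ? ?; lia.
have HF : forall x, x \in [:: a; b; c; d] -> m x = 0 /\ exists j, 0 < m j /\ e x j.
  move=> x Hx; apply: NNPP => Hn.
  have Hnb : forall j, e x j -> 0 < m j -> False.
    move=> j exj mj; case: (posnP (m x)) => [mx0|mxp].
      by apply: Hn; split => //; exists j.
    exact: Hind x j exj mxp mj.
  pose C0 := [set k | (m k == 0) && (k != x)].
  have cov : vertex_cover e C0.
    move=> k l ekl; rewrite !inE; apply/idPn.
    rewrite negb_or !negb_and !negbK -!lt0n => /andP[/orP[Hk|/eqP Hk] /orP[Hl|/eqP Hl]].
    - exact: Hind k l ekl Hk Hl.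
    - by subst l; apply: (Hnb k) => //; rewrite esym.
    - by subst k; apply: (Hnb l).
    - by subst; rewrite eirr in ekl.
  have := Hsc C0 cov; rewrite Hw big1 ?add0n; last by move=> k; rewrite inE => /andP[/eqP].
  have xC0 : (x \in C0) = false by rewrite inE eqxx andbF.
  rewrite !inE in Hx; case/or4P: Hx => /eqP Ex; rewrite -Ex xC0; lia.
have ina : a \in [:: a; b; c; d] by rewrite !inE eqxx.
have inb : b \in [:: a; b; c; d] by rewrite !inE eqxx !orbT.
have inc : c \in [:: a; b; c; d] by rewrite !inE eqxx !orbT.
have ind : d \in [:: a; b; c; d] by rewrite !inE eqxx !orbT.
have [ma0 [i [mi eai]]] := HF a ina.
have [mb0 [j [mj ebj]]] := HF b inb.
have Hb : forall j, 0 < m j -> e b j -> j = i.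
  move=> j' mj' ebj'; apply/eqP; apply: contraT => ne; exfalso.
  apply: (T3 i j' a b c d) => //; try (by rewrite esym); try timeout 1 (by move=> x; rewrite Hu; have [? ? ? ? ?] := P4 (a==x) (b==x) (c==x) (d==x)); try timeout 1 (by apply: mm_le => //; rewrite eq_sym); try timeout 1 (exact: mm_le); timeout 1 exact: mm_le2.
have eib : e b i by rewrite -(Hb j mj ebj).
have Ha : forall j, 0 < m j -> e a j -> j = i.
  move=> j' mj' eaj'; apply/eqP; apply: contraT => ne; exfalso.
  apply: (T3 j' i a b c d) => //; try (by rewrite esym); try timeout 1 (by move=> x; rewrite Hu; have [? ? ? ? ?] := P4 (a==x) (b==x) (c==x) (d==x)); try timeout 1 (by apply: mm_le => //; rewrite eq_sym); try timeout 1 (exact: mm_le); timeout 1 exact: mm_le2.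
have mi1 : m i <= 1.
  rewrite leqNgt; apply/negP => mi2.
  apply: (T3 i i a b c d) => //; try (by rewrite esym); try timeout 1 (by move=> x; rewrite Hu; have [? ? ? ? ?] := P4 (a==x) (b==x) (c==x) (d==x)); try timeout 1 (by apply: mm_le => //; rewrite eq_sym); try timeout 1 (exact: mm_le); timeout 1 exact: mm_le2.
have [mc0 [k [mk eck]]] := HF c inc.
have [md0 [j2 [mj2 edj2]]] := HF d ind.
have Hd : forall j, 0 < m j -> e d j -> j = k.
  move=> j' mj' edj'; apply/eqP; apply: contraT => ne; exfalso.
  apply: (T3 k j' c d a b) => //; try (by rewrite esym); try timeout 1 (by move=> x; rewrite Hu; have [? ? ? ? ?] := P4 (a==x) (b==x) (c==x) (d==x)); try timeout 1 (by apply: mm_le => //; rewrite eq_sym); try timeout 1 (exact: mm_le); timeout 1 exact: mm_le2.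
have ekd : e d k by rewrite -(Hd j2 mj2 edj2).
have Hc : forall j, 0 < m j -> e c j -> j = k.
  move=> j' mj' ecj'; apply/eqP; apply: contraT => ne; exfalso.
  apply: (T3 j' k c d a b) => //; try (by rewrite esym); try timeout 1 (by move=> x; rewrite Hu; have [? ? ? ? ?] := P4 (a==x) (b==x) (c==x) (d==x)); try timeout 1 (by apply: mm_le => //; rewrite eq_sym); try timeout 1 (exact: mm_le); timeout 1 exact: mm_le2.
have ik : k = i.
  apply/eqP; apply: contraT => ne; exfalso.
  have ac : a != c by apply/eqP => E; move/negP: ne; apply; apply/eqP; apply: Ha => //; rewrite E.
  have ad : a != d by apply/eqP => E; move/negP: ne; apply; apply/eqP; apply: Ha => //; rewrite E.
  have bc : b != c by apply/eqP => E; move/negP: ne; apply; apply/eqP; apply: Hb => //; rewrite E.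
  have bd : b != d by apply/eqP => E; move/negP: ne; apply; apply/eqP; apply: Hb => //; rewrite E.
  have ik' : i != k by rewrite eq_sym.
  case/or4P: (gf a b c d eab ecd ac ad bc bd) => H.
  - apply: (T3 i k b d a c) => //; try (by rewrite esym); try timeout 1 (by move=> x; rewrite Hu; have [? ? ? ? ?] := P4 (a==x) (b==x) (c==x) (d==x)); try timeout 1 (by apply: mm_le => //; rewrite eq_sym); try timeout 1 (exact: mm_le); timeout 1 exact: mm_le2.
  - apply: (T3 i k b c a d) => //; try (by rewrite esym); try timeout 1 (by move=> x; rewrite Hu; have [? ? ? ? ?] := P4 (a==x) (b==x) (c==x) (d==x)); try timeout 1 (by apply: mm_le => //; rewrite eq_sym); try timeout 1 (exact: mm_le); timeout 1 exact: mm_le2.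
  - apply: (T3 i k a d b c) => //; try (by rewrite esym); try timeout 1 (by move=> x; rewrite Hu; have [? ? ? ? ?] := P4 (a==x) (b==x) (c==x) (d==x)); try timeout 1 (by apply: mm_le => //; rewrite eq_sym); try timeout 1 (exact: mm_le); timeout 1 exact: mm_le2.
  - apply: (T3 i k a c b d) => //; try (by rewrite esym); try timeout 1 (by move=> x; rewrite Hu; have [? ? ? ? ?] := P4 (a==x) (b==x) (c==x) (d==x)); try timeout 1 (by apply: mm_le => //; rewrite eq_sym); try timeout 1 (exact: mm_le); timeout 1 exact: mm_le2.
subst k.
exists i; split => // C [covC _].
rewrite /in_prime_pow mmul_sum u_sum.
have -> : \sum_(k in C) var i k = (i \in C).
  by rewrite /var; under eq_bigr => k _ do rewrite eq_sym; exact: sum_eq1.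
pose Cs := [set k | ((k \in C) && (m k == 0)) || ((k == i) && (k \in C)) ||
                    [exists j, [&& j \in C, 0 < m j, j != i & e j k]]].
have side : forall k l, e k l -> k \in C -> (k \in Cs) || (l \in Cs).
  move=> k l ekl kC; rewrite !inE kC /=.
  case: (boolP (m k == 0)) => mkz; first by rewrite orTb.
  case: (boolP (k == i)) => ki; first by rewrite orbT.
  apply/orP; right; apply/orP; right; apply/existsP; exists k.
  by rewrite kC lt0n mkz ki ekl.
have cov : vertex_cover e Cs.
  move=> k l ekl; case: (boolP (k \in C)) => kC; first exact: side.
  have lC : l \in C by move: (covC k l ekl); rewrite (negbTE kC).
  by rewrite orbC; apply: side lC; rewrite esym.
have H := Hsc Cs cov; rewrite Hw in H.
have iCs : (i \in Cs) = (i \in C).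
  rewrite inE eqxx /=; case: (boolP (i \in C)) => iC /=; first by rewrite orbT.
  apply/existsP => -[j' /and4P[_ mj' _ eji]]; exact: Hind j' i eji mj' mi.
have mCs : \sum_(k in Cs) m k <= (i \in C).
  rewrite -iCs -sum_eq1; apply: leq_sum => k; rewrite inE => Hk.
  case: (i =P k) => [<-|ne] //=.
  case: (posnP (m k)) => [->|mkp] //; exfalso.
  move: Hk => /orP[/orP[/andP[_ /eqP mk0]|/andP[/eqP ki _]]|/existsP[j' /and4P[_ mj' _ ejk]]].
  - by rewrite mk0 in mkp.
  - by apply: ne.
  - exact: Hind j' k ejk mj' mkp.
have memx : forall x, m x = 0 -> (forall j, 0 < m j -> e x j -> j = i) -> (x \in Cs) = (x \in C).
  move=> x mx Hx; rewrite inE mx eqxx andbT.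
  case: (boolP (x \in C)) => xC /=; first done.
  rewrite andbF /=.
  apply/existsP => -[j' /and4P[_ mj' nji ejx]]; rewrite esym in ejx.
  by rewrite (Hx j' mj' ejx) eqxx in nji.
move: H; rewrite (memx a ma0 Ha) (memx b mb0 Hb) (memx c mc0 Hc) (memx d md0 Hd).
move=> H; apply: leq_trans H _; by rewrite leq_add2r.
Qed.

Theorem lemma4p1 (n : nat) (e : rel 'I_n) (u : monom n) :
  simple_graph e -> gap_free e ->
  min_mon_gen (in_edge_pow e 2) u ->
  let X0 := fun i : 'I_n => colon (in_edge_sympow e 4) u (var i) in
  forall m : monom n,
    (colon (in_edge_sympow e 4) u m \/ colon (in_edge_pow e 3) u m) <->
    (colon (in_edge_pow e 3) u m \/ in_var_ideal X0 m).
Proof.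
move=> [esym eirr] gf [Hu2 Hmin] X0 m; split.
- case=> [H4|H3]; last by left.
  have [H3|N3] := classic (colon (in_edge_pow e 3) u m); first by left.
  right.
  case: Hu2 => es [Hs [Hall Hdvd]].
  have Eu : edges_prod es = u.
    apply: Hmin => //; exists es; split => //; split => // k; exact: leqnn.
  case: es Hs Hall Hdvd Eu => [|[a b] [|[c d] [|]]] //= _ /andP[eab /andP[ecd _]] _ Eu.
  subst u.
  have [i [mi Hi]] := @key n e m a b c d esym eirr gf eab ecd H4 N3.
  by exists i.
- case=> [H3|[i [Xi mi]]]; first by right.
  left => C HC; have := Xi C HC; rewrite /in_prime_pow => H.
  apply: leq_trans H _; apply: leq_sum => k _; rewrite /mmul leq_add2r /var.
  by case: eqP => [->|] //=.
Qed.
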